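(* If a finitely generated residually finite group $\Gamma$ is presentable by a product, then its rank gradient vanishes: $\mathrm{RG}(\Gamma)=0$.
   Context: For a finitely generated group $\Gamma$ let $d(\Gamma)$ be the minimal number of generators. The rank gradient is $\mathrm{RG}(\Gamma)=\inf_{\Gamma'}\frac{d(\Gamma')-1}{[\Gamma:\Gamma']}$, the infimum taken over all finite index subgroups $\Gamma'\subset\Gamma$. An infinite group $\Gamma$ is presentable by a product if there exist groups $\Gamma_1,\Gamma_2$ and a homomorphism $\varphi\colon\Gamma_1\times\Gamma_2\to\Gamma$ whose image has finite index in $\Gamma$ and such that both $\varphi(\Gamma_1)$ and $\varphi(\Gamma_2)$ are infinite. *)

(* Defs.v *)
From Stdlib Require Import Reals List.
From Coquelicot Require Import Coquelicot.
Open Scope R_scope.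

Record group := Group {
  carrier :> Type;
  gmul : carrier -> carrier -> carrier;
  gone : carrier;
  ginv : carrier -> carrier;
  gmulA : forall x y z, gmul x (gmul y z) = gmul (gmul x y) z;
  gmul1l : forall x, gmul gone x = x;
  gmul1r : forall x, gmul x gone = x;
  gmulVl : forall x, gmul (ginv x) x = gone;
  gmulVr : forall x, gmul x (ginv x) = gone
}.

Arguments gmul {g}. Arguments gone {g}. Arguments ginv {g}.

Definition is_subgroup (G : group) (H : G -> Prop) : Prop :=
  H gone /\ (forall x y, H x -> H y -> H (gmul x y)) /\ (forall x, H x -> H (ginv x)).

Definition is_normal (G : group) (H : G -> Prop) : Prop :=
  is_subgroup G H /\ forall g x, H x -> H (gmul (gmul g x) (ginv g)).

Definition infinite_set (G : group) (A : G -> Prop) : Prop :=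
  ~ exists l : list G, forall x, A x -> In x l.

Definition infinite_group (G : group) : Prop := infinite_set G (fun _ => True).

(* [G : H] = n : there are n representatives of pairwise distinct left cosets
   g H covering G. *)
Definition has_index (G : group) (H : G -> Prop) (n : nat) : Prop :=
  exists l : list G, length l = n /\
    (forall i j, (i < n)%nat -> (j < n)%nat ->
       H (gmul (ginv (nth i l gone)) (nth j l gone)) -> i = j) /\
    (forall g, exists r, In r l /\ H (gmul (ginv r) g)).

Definition finite_index (G : group) (H : G -> Prop) : Prop :=
  exists n, has_index G H n.

Definition generated (G : group) (S : list G) (x : G) : Prop :=
  forall K : G -> Prop, is_subgroup G K -> (forall s, In s S -> K s) -> K x.

Definition generates (G : group) (H : G -> Prop) (S : list G) : Prop :=
  (forall s, In s S -> H s) /\ (forall x, H x <-> generated G S x).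

Definition min_gens (G : group) (H : G -> Prop) (k : nat) : Prop :=
  (exists S, length S = k /\ generates G H S) /\
  (forall S, generates G H S -> (k <= length S)%nat).

Definition finitely_generated (G : group) : Prop :=
  exists S : list G, generates G (fun _ => True) S.

Definition residually_finite (G : group) : Prop :=
  forall g : G, g <> gone ->
    exists N : G -> Prop, is_normal G N /\ finite_index G N /\ ~ N g.

Section Prod.
Variables G1 G2 : group.
Definition pmul (x y : G1 * G2) : G1 * G2 := (gmul (fst x) (fst y), gmul (snd x) (snd y)).
Definition pone : G1 * G2 := (gone, gone).
Definition pinv (x : G1 * G2) : G1 * G2 := (ginv (fst x), ginv (snd x)).
Lemma pmulA x y z : pmul x (pmul y z) = pmul (pmul x y) z.
Proof. destruct x, y, z; unfold pmul; simpl; now rewrite !gmulA. Qed.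
Lemma pmul1l x : pmul pone x = x.
Proof. destruct x; unfold pmul; simpl; now rewrite !gmul1l. Qed.
Lemma pmul1r x : pmul x pone = x.
Proof. destruct x; unfold pmul; simpl; now rewrite !gmul1r. Qed.
Lemma pmulVl x : pmul (pinv x) x = pone.
Proof. destruct x; unfold pmul; simpl; now rewrite !gmulVl. Qed.
Lemma pmulVr x : pmul x (pinv x) = pone.
Proof. destruct x; unfold pmul; simpl; now rewrite !gmulVr. Qed.
Definition prod_group : group :=
  Group (G1 * G2) pmul pone pinv pmulA pmul1l pmul1r pmulVl pmulVr.
End Prod.

Definition is_hom (G H : group) (f : G -> H) : Prop :=
  forall x y, f (gmul x y) = gmul (f x) (f y).

Definition presentable_by_product (G : group) : Prop :=
  infinite_group G /\
  exists (G1 G2 : group) (phi : prod_group G1 G2 -> G),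
    is_hom (prod_group G1 G2) G phi /\
    (exists K : G -> Prop, is_subgroup G K /\ finite_index G K /\
       forall y, K y <-> exists x, phi x = y) /\
    infinite_set G (fun y => exists x1 : G1, phi (x1, gone) = y) /\
    infinite_set G (fun y => exists x2 : G2, phi (gone, x2) = y).

Definition rank_gradient (G : group) : Rbar :=
  Glb_Rbar (fun r => exists (H : G -> Prop) (n k : nat),
    is_subgroup G H /\ has_index G H n /\ min_gens G H k /\
    r = (INR k - 1) / INR n).

(* Main.v *)
Require Import Defs.
From Stdlib Require Import Reals.
From Coquelicot Require Import Coquelicot.
From Stdlib Require Import List Arith Lia Lra Psatz Classical ClassicalEpsilon.
Local Open Scope nat_scope.

Local Infix "⋅" := gmul (at level 40, left associativity).

Section Basics.
Context {G : group}.
Implicit Types x y z : G.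

Lemma mA x y z : x ⋅ y ⋅ z = x ⋅ (y ⋅ z).
Proof. now rewrite gmulA. Qed.
Lemma m1l x : gone ⋅ x = x. Proof. apply gmul1l. Qed.
Lemma m1r x : x ⋅ gone = x. Proof. apply gmul1r. Qed.
Lemma mVl x : ginv x ⋅ x = gone. Proof. apply gmulVl. Qed.
Lemma mVr x : x ⋅ ginv x = gone. Proof. apply gmulVr. Qed.
Lemma mK x y : x ⋅ (ginv x ⋅ y) = y.
Proof. now rewrite gmulA, gmulVr, gmul1l. Qed.
Lemma mKV x y : ginv x ⋅ (x ⋅ y) = y.
Proof. now rewrite gmulA, gmulVl, gmul1l. Qed.
Lemma mcancel x y z : x ⋅ y = x ⋅ z -> y = z.
Proof. intro H. rewrite <- (mKV x y), H. apply mKV. Qed.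
Lemma mcancelr x y z : y ⋅ x = z ⋅ x -> y = z.
Proof. intro H. rewrite <- (m1r y), <- (mVr x), gmulA, H, <- gmulA, gmulVr. apply m1r. Qed.
Lemma inv_uniq x y : x ⋅ y = gone -> ginv x = y.
Proof. intro H. apply (mcancel x). now rewrite gmulVr. Qed.
Lemma invI x : ginv (ginv x) = x.
Proof. apply inv_uniq. apply gmulVl. Qed.
Lemma invM x y : ginv (x ⋅ y) = ginv y ⋅ ginv x.
Proof. apply inv_uniq. now rewrite mA, mK, gmulVr. Qed.
Lemma inv1 : ginv (@gone G) = gone.
Proof. apply inv_uniq. apply gmul1l. Qed.
Lemma mKr x y : x ⋅ ginv y ⋅ y = x.
Proof. now rewrite mA, gmulVl, gmul1r. Qed.
Lemma mKVr x y : x ⋅ y ⋅ ginv y = x.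
Proof. now rewrite mA, gmulVr, gmul1r. Qed.
End Basics.

Ltac gs := repeat (rewrite ?mA, ?invM, ?invI, ?inv1, ?m1l, ?m1r, ?mVr, ?mVl, ?mK, ?mKV in *).
Ltac gsg := repeat (rewrite ?mA, ?invM, ?invI, ?inv1, ?m1l, ?m1r, ?mVr, ?mVl, ?mK, ?mKV).
Section Sub.
Context {G : group}.
Implicit Types x y z : G.

Definition sg (H : G -> Prop) := is_subgroup G H.
Definition eqv (H : G -> Prop) x y := H (ginv x ⋅ y).
Definition pw (H : G -> Prop) (l : list G) :=
  NoDup l /\ forall a b, In a l -> In b l -> eqv H a b -> a = b.
Definition covon (H : G -> Prop) (l : list G) (P : G -> Prop) :=
  forall g, P g -> exists r, In r l /\ eqv H r g.

Lemma sg1 H : sg H -> H gone. Proof. intros [? ?]; auto. Qed.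
Lemma sgM H x y : sg H -> H x -> H y -> H (x ⋅ y). Proof. intros [? [? ?]]; auto. Qed.
Lemma sgV H x : sg H -> H x -> H (ginv x). Proof. intros [? [? ?]]; auto. Qed.
Lemma sgVi H x : sg H -> H (ginv x) -> H x.
Proof. intros HH h. rewrite <- invI. now apply sgV. Qed.

Lemma eqv_refl H x : sg H -> eqv H x x.
Proof. intro. unfold eqv. rewrite mVl. now apply sg1. Qed.
Lemma eqv_sym H x y : sg H -> eqv H x y -> eqv H y x.
Proof. unfold eqv; intros HH h. apply sgV in h; auto. now rewrite invM, invI in h. Qed.
Lemma eqv_trans H x y z : sg H -> eqv H x y -> eqv H y z -> eqv H x z.
Proof. unfold eqv; intros HH h1 h2. pose proof (sgM _ _ _ HH h1 h2). now rewrite mA, mK in H0. Qed.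

Lemma eqv_mono (H H' : G -> Prop) x y : (forall g, H g -> H' g) -> eqv H x y -> eqv H' x y.
Proof. unfold eqv; auto. Qed.

Lemma gen_sg S : sg (generated G S).
Proof.
  split; [|split].
  - intros K HK _. now apply sg1.
  - intros x y hx hy K HK HS. apply sgM; [exact HK|apply hx|apply hy]; auto.
  - intros x hx K HK HS. apply sgV; [exact HK|apply hx]; auto.
Qed.
Lemma gen_in S s : In s S -> generated G S s.
Proof. intros h K HK HS. auto. Qed.
Lemma gen_min S (K : G -> Prop) x : sg K -> (forall s, In s S -> K s) -> generated G S x -> K x.
Proof. intros HK HS h. now apply h. Qed.
Lemma gen_mono S S' x : (forall s, In s S -> generated G S' s) -> generated G S x -> generated G S' x.
Proof. intros HS h. apply (gen_min S); auto. apply gen_sg. Qed.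
Lemma gen_app_l S S' x : generated G S x -> generated G (S ++ S') x.
Proof. apply gen_mono. intros s hs. apply gen_in. apply in_or_app; auto. Qed.
Lemma gen_app_r S S' x : generated G S' x -> generated G (S ++ S') x.
Proof. apply gen_mono. intros s hs. apply gen_in. apply in_or_app; auto. Qed.
Lemma generates_gen S : generates G (generated G S) S.
Proof. split. intros; now apply gen_in. intro; tauto. Qed.

Lemma choice_fun {A B : Type} (P : A -> B -> Prop) : (forall a, exists b, P a b) -> exists f, forall a, P a (f a).
Proof.
  intro h. exists (fun a => proj1_sig (constructive_indefinite_description _ (h a))).
  intro a. exact (proj2_sig (constructive_indefinite_description _ (h a))).
Qed.

Lemma transversal H (P : G -> Prop) l e : sg H -> (forall g, P g -> exists r, In r l /\ eqv H r g) -> P e ->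
  exists T, (forall t, In t T -> P t) /\ In e T /\ pw H T /\ covon H T P.
Proof.
  intros HH Hl He.
  assert (main : forall l0 T0, (forall t, In t T0 -> P t) -> pw H T0 ->
    exists T, (forall t, In t T -> P t) /\ incl T0 T /\ pw H T /\
      forall g, P g -> (exists r, In r l0 /\ eqv H r g) -> exists t, In t T /\ eqv H t g).
  { clear Hl. intro l0. induction l0 as [|r l1 IH]; intros T0 HP Hpw.
    - exists T0. split; [auto|split; [apply incl_refl|split; [auto|]]]. intros g _ [r [[] _]].
    - destruct (classic (exists g, P g /\ eqv H r g /\ ~ exists t, In t T0 /\ eqv H t g)) as [[g [Pg [rg ng]]]|nex].
      + destruct (IH (g :: T0)) as [T [TP [Tinc [Tpw Tcov]]]].
        * intros t [<-|ht]; auto.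
        * destruct Hpw as [nd uq]. split.
          -- constructor; auto. intro hg. apply ng. exists g; split; auto. now apply eqv_refl.
          -- intros a b [<-|ha] [<-|hb] hab; auto.
             ++ exfalso; apply ng. exists b; split; auto. now apply eqv_sym.
             ++ exfalso; apply ng. exists a; split; auto.
        * exists T. split; [auto|split; [|split; [auto|]]]. intros x hx. apply Tinc. now right.
          intros g' Pg' [r' [[<-|hr'] rg']].
          -- exists g. split. apply Tinc; now left. apply eqv_trans with r; auto. now apply eqv_sym.
          -- apply Tcov; eauto.
      + destruct (IH T0 HP Hpw) as [T [TP [Tinc [Tpw Tcov]]]].
        exists T. split; [auto|split; [auto|split; [auto|]]].
        intros g Pg [r' [[<-|hr'] rg]].
        * destruct (classic (exists t, In t T0 /\ eqv H t g)) as [[t [ht htg]]|nt].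
          -- exists t; split; auto.
          -- exfalso. apply nex. exists g; auto.
        * apply Tcov; eauto. }
  destruct (main l (e :: nil)) as [T [TP [Tinc [Tpw Tcov]]]].
  - intros t [<-|[]]; auto.
  - split. constructor. intros []. constructor. intros a b [<-|[]] [<-|[]]; auto.
  - exists T. split; [auto|split; [|split; [auto|]]]. apply Tinc; now left.
    intros g Pg. apply Tcov; auto.
Qed.

Lemma pigeon H l1 l2 : sg H -> pw H l1 -> (forall a, In a l1 -> exists r, In r l2 /\ eqv H r a) -> length l1 <= length l2.
Proof.
  intros HH [nd uq] hc.
  destruct (choice_fun (fun a r => In a l1 -> In r l2 /\ eqv H r a)) as [f hf].
  { intro a. destruct (classic (In a l1)) as [ha|ha].
    - destruct (hc a ha) as [r hr]; exists r; auto.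
    - exists a; tauto. }
  rewrite <- (length_map f). apply NoDup_incl_length.
  - clear hc. revert nd uq. induction l1 as [|a l IH]; intros nd uq; simpl; constructor.
    + intro hin. apply in_map_iff in hin as [b [fb hb]].
      inversion nd; subst.
      assert (a = b). { apply uq. now left. now right.
        destruct (hf a) as [_ e1]. now left. destruct (hf b) as [_ e2]. now right.
        rewrite <- fb in e1. apply eqv_trans with (f b); auto. now apply eqv_sym. }
      subst; auto.
    + inversion nd; subst. apply IH; auto.
      * intros a' ha'. apply hf. now right.
      * intros x y hx hy. apply uq; now right.
  - intros r hr. apply in_map_iff in hr as [a [<- ha]]. now apply hf.
Qed.

Lemma pw_mono (H H' : G -> Prop) l : (forall g, H g -> H' g) -> pw H' l -> pw H l.
Proof. intros hm [nd uq]. split; auto. intros a b ha hb hab. apply uq; auto. now apply eqv_mono with H. Qed.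

Lemma has_index_of H T : sg H -> pw H T -> covon H T (fun _ => True) -> has_index G H (length T).
Proof.
  intros HH [nd uq] cov. exists T. split; auto. split.
  - intros i j hi hj hij. apply (proj1 (NoDup_nth T gone) nd); auto.
    apply uq; auto; apply nth_In; auto.
  - intro g. destruct (cov g I) as [r [hr e]]. exists r; auto.
Qed.

Lemma has_index_pw H n : sg H -> has_index G H n -> exists T, length T = n /\ pw H T /\ covon H T (fun _ => True).
Proof.
  intros HH [l [hl [inj cov]]]. exists l. split; auto. split.
  - assert (nd : NoDup l).
    { apply (proj2 (NoDup_nth l gone)). intros i j hi hj e. apply inj; try lia.
      rewrite e. apply eqv_refl; auto. }
    split; auto. intros a b ha hb hab.
    apply (In_nth l a gone) in ha as [i [hi <-]]. apply (In_nth l b gone) in hb as [j [hj <-]].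
    f_equal. apply inj; auto; lia.
  - intros g _. destruct (cov g) as [r [hr e]]. exists r; auto.
Qed.

Lemma cov_inter H1 H2 l1 l2 : sg H1 -> sg H2 -> covon H1 l1 (fun _ => True) -> covon H2 l2 (fun _ => True) ->
  exists l, covon (fun g => H1 g /\ H2 g) l (fun _ => True).
Proof.
  intros S1 S2 c1 c2.
  destruct (choice_fun (fun (p : G * G) g => (exists g', eqv H1 (fst p) g' /\ eqv H2 (snd p) g') -> eqv H1 (fst p) g /\ eqv H2 (snd p) g)) as [f hf].
  { intros [a b]. destruct (classic (exists g', eqv H1 a g' /\ eqv H2 b g')) as [[g' h]|n].
    exists g'; auto. exists a; tauto. }
  exists (map f (list_prod l1 l2)). intros g _.
  destruct (c1 g I) as [r1 [i1 e1]]. destruct (c2 g I) as [r2 [i2 e2]].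
  exists (f (r1, r2)). split. apply in_map. now apply in_prod.
  destruct (hf (r1, r2)) as [f1 f2]. exists g; auto. simpl in *.
  change (eqv H1 (f (r1, r2)) g /\ eqv H2 (f (r1, r2)) g).
  split; [apply (eqv_trans H1) with r1 | apply (eqv_trans H2) with r2]; auto; now apply eqv_sym.
Qed.

Lemma cov_restrict H l (P : G -> Prop) : sg H -> covon H l (fun _ => True) ->
  exists l', (forall x, In x l' -> P x) /\ covon H l' P.
Proof.
  intros HH c.
  destruct (choice_fun (fun r g => (exists p, P p /\ eqv H r p) -> P g /\ eqv H r g)) as [f hf].
  { intro r. destruct (classic (exists p, P p /\ eqv H r p)) as [[p h]|n]. exists p; auto. exists r; tauto. }
  exists (map f (filter (fun r => if excluded_middle_informative (exists p, P p /\ eqv H r p) then true else false) l)).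
  split.
  - intros x hx. apply in_map_iff in hx as [r [<- hr]]. apply filter_In in hr as [_ hr].
    destruct excluded_middle_informative as [e|]; try discriminate. now apply hf.
  - intros g Pg. destruct (c g I) as [r [hr e]].
    assert (ex : exists p, P p /\ eqv H r p) by eauto.
    exists (f r). split.
    + apply in_map. apply filter_In. split; auto. destruct excluded_middle_informative; tauto.
    + destruct (hf r ex) as [_ e']. apply eqv_trans with r; auto. now apply eqv_sym.
Qed.
End Sub.
Lemma flat_map_len {A B : Type} (f : A -> list B) (l : list A) c :
  (forall a, In a l -> length (f a) = c) -> length (flat_map f l) = length l * c.
Proof.
  induction l as [|a l IH]; intros h; simpl; auto.
  rewrite length_app, h by (now left). rewrite IH; auto. intros; apply h; now right.
Qed.

Section Schreier.
Context {G : group}.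

Lemma pw_uniq (H : G -> Prop) T a b : pw H T -> In a T -> In b T -> eqv H a b -> a = b.
Proof. intros [_ u]; auto. Qed.

Lemma schreier (K H : G -> Prop) S T : sg K -> sg H -> (forall h, H h -> K h) -> generates G K S ->
  (forall t, In t T -> K t) -> In gone T -> pw H T -> covon H T K ->
  exists U, length U = length S * length T /\
    (forall u, In u U -> exists s t t', In s S /\ In t T /\ In t' T /\ eqv H t' (s ⋅ t) /\ u = ginv t' ⋅ (s ⋅ t)) /\
    (forall h, H h -> generated G U h).
Proof.
  intros SK SH HK [SinK Kgen] TK T1 Tpw Tcov.
  destruct (choice_fun (fun g t => K g -> In t T /\ eqv H t g)) as [rep hrep].
  { intro g. destruct (classic (K g)) as [kg|nk].
    - destruct (Tcov g kg) as [t ht]. exists t; auto.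
    - exists gone; tauto. }
  assert (rep_eq : forall g t, K g -> In t T -> eqv H t g -> rep g = t).
  { intros g t kg ht e. destruct (hrep g kg) as [h1 h2]. apply (pw_uniq H T); auto.
    apply eqv_trans with g; auto. now apply eqv_sym. }
  assert (rep_t : forall t, In t T -> rep t = t).
  { intros t ht. apply rep_eq; auto. now apply eqv_refl. }
  assert (Ss : forall s, In s S -> K s) by auto.
  set (U := flat_map (fun s => map (fun t => ginv (rep (s ⋅ t)) ⋅ (s ⋅ t)) T) S).
  exists U. split; [|split].
  - apply flat_map_len. intros; apply length_map.
  - intros u hu. apply in_flat_map in hu as [s [hs hu]]. apply in_map_iff in hu as [t [<- ht]].
    assert (kst : K (s ⋅ t)) by (apply sgM; auto).
    exists s, t, (rep (s ⋅ t)). destruct (hrep _ kst). repeat split; auto.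
  - set (Q := fun g => K g /\ forall t, In t T -> generated G U (ginv (rep (g ⋅ t)) ⋅ (g ⋅ t))).
    assert (SQ : sg Q).
    { split; [|split].
      - split. now apply sg1. intros t ht. rewrite m1l, rep_t, mVl by auto. apply sg1, gen_sg.
      - intros g h [kg qg] [kh qh]. split. now apply sgM.
        intros t ht. set (t1 := rep (h ⋅ t)).
        assert (kht : K (h ⋅ t)) by (apply sgM; auto).
        destruct (hrep _ kht) as [t1T t1e]. fold t1 in t1T, t1e.
        assert (e : rep (g ⋅ t1) = rep (g ⋅ h ⋅ t)).
        { rewrite (rep_eq (g ⋅ h ⋅ t) (rep (g ⋅ t1))); auto.
          - apply sgM; auto; apply sgM; auto.
          - destruct (hrep (g ⋅ t1)) as [a _]; auto. apply sgM; auto.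
          - destruct (hrep (g ⋅ t1)) as [a b]. apply sgM; auto.
            apply eqv_trans with (g ⋅ t1); auto. unfold eqv. rewrite invM, !mA, mKV. exact t1e. }
        pose proof (sgM _ _ _ (gen_sg U) (qg t1 t1T) (qh t ht)) as P.
        rewrite e in P. fold t1 in P. rewrite !mA, mK in P. rewrite !mA. exact P.
      - intros g [kg qg]. split. now apply sgV.
        intros t ht. set (t1 := rep (ginv g ⋅ t)).
        assert (kgt : K (ginv g ⋅ t)) by (apply sgM; auto; now apply sgV).
        destruct (hrep _ kgt) as [t1T t1e]. fold t1 in t1T, t1e.
        assert (e : rep (g ⋅ t1) = t).
        { apply rep_eq; auto. apply sgM; auto. unfold eqv in *.
          pose proof (sgV _ _ SH t1e) as P. rewrite !invM, !invI, !mA in P. exact P. }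
        pose proof (sgV _ _ (gen_sg U) (qg t1 t1T)) as P. rewrite e in P.
        rewrite invM, invM, invI, mA in P. exact P. }
    assert (SinQ : forall s, In s S -> Q s).
    { intros s hs. split; auto. intros t ht. apply gen_in. apply in_flat_map. exists s; split; auto.
      apply in_map_iff. exists t; auto. }
    intros h hh. assert (qh : Q h).
    { apply (gen_min S); auto. apply Kgen. auto. }
    destruct qh as [_ qh]. specialize (qh gone T1). rewrite m1r in qh.
    rewrite (rep_eq h gone) in qh; auto. now rewrite inv1, m1l in qh.
    unfold eqv. now rewrite inv1, m1l.
Qed.
End Schreier.
Lemma nodup_map_inj {A B : Type} (f : A -> B) l : NoDup l ->
  (forall a b, In a l -> In b l -> f a = f b -> a = b) -> NoDup (map f l).
Proof.
  induction l as [|a l IH]; intros nd inj; simpl; constructor.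
  - intro h. apply in_map_iff in h as [b [fb hb]]. inversion nd; subst.
    assert (b = a). { apply inj; auto. now right. now left. } subst. contradiction.
  - inversion nd; subst. apply IH; auto. intros; apply inj; auto; now right.
Qed.

Lemma nodup_prod {A B : Type} (X : list A) (Y : list B) : NoDup X -> NoDup Y -> NoDup (list_prod X Y).
Proof.
  induction X as [|x X IH]; intros nx ny; simpl. constructor.
  inversion nx; subst. apply NoDup_app; auto.
  - apply nodup_map_inj; auto. intros a b _ _ e; now inversion e.
  - intros [a b] h1 h2. apply in_map_iff in h1 as [c [e _]]. inversion e; subst.
    apply in_prod_iff in h2 as [h _]. auto.
Qed.

Ltac mem := repeat (match goal with |- _ (gmul _ _) => apply sgM | |- _ (ginv _) => apply sgV end); auto.

Section Core.
Context {G : group}.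

Definition AN (A0 N : G -> Prop) g := exists a n, A0 a /\ N n /\ g = a ⋅ n.
Definition nrm (K N : G -> Prop) := forall k n, K k -> N n -> N (k ⋅ n ⋅ ginv k).
Definition prodl (X Y : list G) := map (fun p => fst p ⋅ snd p) (list_prod X Y).

Lemma nrm' K N k n : sg K -> nrm K N -> K k -> N n -> N (ginv k ⋅ n ⋅ k).
Proof. intros SK h hk hn. pose proof (h (ginv k) n (sgV _ _ SK hk) hn). now rewrite invI in H. Qed.

Lemma AN_sg K A0 N : sg K -> sg A0 -> sg N -> (forall g, A0 g -> K g) -> nrm K N -> sg (AN A0 N).
Proof.
  intros SK SA SN AK nN. split; [|split].
  - exists gone, gone. split; [|split]; try now apply sg1. now rewrite m1l.
  - intros g h [a [n [ha [hn ->]]]] [a' [n' [ha' [hn' ->]]]].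
    exists (a ⋅ a'), (ginv a' ⋅ n ⋅ a' ⋅ n'). split; [|split].
    + now apply sgM.
    + apply sgM; auto. apply nrm' with K; auto.
    + gsg. reflexivity.
  - intros g [a [n [ha [hn ->]]]]. exists (ginv a), (a ⋅ ginv n ⋅ ginv a). split; [|split].
    + now apply sgV.
    + apply nN; auto. now apply sgV.
    + gsg. reflexivity.
Qed.

Lemma AN_N A0 N g : sg A0 -> N g -> AN A0 N g.
Proof. intros SA h. exists gone, g. split; [now apply sg1|split; auto]. now rewrite m1l. Qed.
Lemma AN_A A0 N g : sg N -> A0 g -> AN A0 N g.
Proof. intros SN h. exists g, gone. split; [auto|split; [now apply sg1|]]. now rewrite m1r. Qed.

Section CoreSec.
Variables (K A0 B0 N : G -> Prop) (X Y : list G).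
Hypotheses (SK : sg K) (SA : sg A0) (SB : sg B0) (SN : sg N)
  (AK : forall g, A0 g -> K g) (BK : forall g, B0 g -> K g) (NK : forall g, N g -> K g)
  (nN : nrm K N) (comm : forall a b, A0 a -> B0 b -> a ⋅ b = b ⋅ a)
  (XB : forall x, In x X -> B0 x) (X1 : In gone X) (Xpw : pw (AN A0 N) X) (Xcov : covon (AN A0 N) X K)
  (YA : forall y, In y Y -> A0 y) (Y1 : In gone Y) (Ypw : pw N Y) (Ycov : covon N Y A0).

Lemma prodl_key x x' y y' : In x X -> In x' X -> In y Y -> In y' Y -> eqv N (x ⋅ y) (x' ⋅ y') -> x = x' /\ y = y'.
Proof.
  intros hx hx' hy hy' e. unfold eqv in e.
  assert (x = x').
  { apply (pw_uniq (AN A0 N) X); auto. unfold eqv.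
    exists (y ⋅ ginv y'), (y' ⋅ (ginv (x ⋅ y) ⋅ (x' ⋅ y')) ⋅ ginv y'). split; [|split].
    - apply sgM; auto. apply sgV; auto.
    - apply nN; auto.
    - gsg. reflexivity. }
  subst. split; auto. apply (pw_uniq N Y); auto. unfold eqv. rewrite invM, mA, mKV in e. exact e.
Qed.

Lemma prodl_props : length (prodl X Y) = length X * length Y /\ (forall t, In t (prodl X Y) -> K t) /\
  In gone (prodl X Y) /\ pw N (prodl X Y) /\ covon N (prodl X Y) K.
Proof.
  split; [|split; [|split; [|split]]].
  - unfold prodl. now rewrite length_map, length_prod.
  - intros t ht. apply in_map_iff in ht as [[x y] [<- hp]]. apply in_prod_iff in hp as [hx hy].
    simpl. apply sgM; auto.
  - apply in_map_iff. exists (gone, gone). split. apply m1l. now apply in_prod.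
  - split.
    + apply nodup_map_inj. apply nodup_prod. apply Xpw. apply Ypw.
      intros [x y] [x' y'] h1 h2 e. apply in_prod_iff in h1, h2. simpl in e.
      destruct (prodl_key x x' y y') as [-> ->]; try tauto. unfold eqv. rewrite e, mVl. now apply sg1.
    + intros a b ha hb e. apply in_map_iff in ha as [[x y] [<- h1]]. apply in_map_iff in hb as [[x' y'] [<- h2]].
      apply in_prod_iff in h1, h2. simpl in *. destruct (prodl_key x x' y y') as [-> ->]; tauto.
  - intros k hk. destruct (Xcov k hk) as [x [hx [a [n [ha [hn e]]]]]].
    destruct (Ycov a ha) as [y [hy ey]]. exists (x ⋅ y). split.
    + apply in_map_iff. exists (x, y). split; auto. now apply in_prod.
    + unfold eqv in *. rewrite invM, mA, e, <- mA. now apply sgM.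
Qed.

Lemma core SAl SBl : generates G K (SAl ++ SBl) -> (forall s, In s SAl -> A0 s) -> (forall s, In s SBl -> B0 s) ->
  exists V, length V = length SBl * length X /\ (forall v, In v V -> N v) /\
  forall E, (forall v, In v V -> generated G E v) -> (forall a, A0 a -> N a -> generated G E a) ->
    forall n, N n -> generated G E n.
Proof.
  intros Kgen SAA SBB.
  destruct (choice_fun (fun (p : G * G) v => In (fst p) SBl -> In (snd p) X ->
     exists x'' y2, In x'' X /\ In y2 Y /\ N v /\ v = ginv y2 ⋅ (ginv x'' ⋅ (fst p ⋅ snd p)))) as [vf hvf].
  { intros [s x]. destruct (classic (In s SBl /\ In x X)) as [[hs hx]|nn].
    - assert (ksx : K (s ⋅ x)) by (apply sgM; auto; apply BK; auto; apply Kgen; apply gen_in; apply in_or_app; auto).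
      destruct (Xcov _ ksx) as [x'' [hx'' [a [n [ha [hn e]]]]]].
      destruct (Ycov a ha) as [y2 [hy2 ey]].
      exists (ginv y2 ⋅ (ginv x'' ⋅ (s ⋅ x))). intros _ _. exists x'', y2. repeat split; auto.
      unfold eqv in *. simpl. rewrite e, <- mA. now apply sgM.
    - exists gone. intros h1 h2. exfalso; tauto. }
  exists (map vf (list_prod SBl X)). split; [|split].
  - now rewrite length_map, length_prod.
  - intros v hv. apply in_map_iff in hv as [[s x] [<- hp]]. apply in_prod_iff in hp as [hs hx].
    destruct (hvf (s, x) hs hx) as [? [? [? [? [? ?]]]]]; auto.
  - intros E hV hAN n hn.
    destruct (prodl_props) as [_ [TK [T1 [Tpw Tcov]]]].
    destruct (schreier K N (SAl ++ SBl) (prodl X Y)) as [U [_ [hU genU]]]; auto.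
    apply (gen_mono U); auto.
    intros u hu. destruct (hU u hu) as [s [t [t' [hs [ht [ht' [e ->]]]]]]].
    apply in_map_iff in ht as [[x y] [<- hp]]. apply in_prod_iff in hp as [hx hy].
    apply in_map_iff in ht' as [[x' y'] [<- hp']]. apply in_prod_iff in hp' as [hx' hy'].
    simpl in *. unfold eqv in e.
    assert (Bx : B0 x) by auto. assert (Bx' : B0 x') by auto. assert (Ay : A0 y) by auto. assert (Ay' : A0 y') by auto.
    apply in_app_or in hs as [hs|hs].
    + assert (As : A0 s) by auto.
      assert (cx : s ⋅ x = x ⋅ s) by auto.
      assert (x' = x).
      { apply (pw_uniq (AN A0 N) X); auto. unfold eqv.
        exists (y' ⋅ (ginv y ⋅ ginv s)), ((s ⋅ y) ⋅ (ginv (x' ⋅ y') ⋅ (s ⋅ (x ⋅ y))) ⋅ ginv (s ⋅ y)).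
        split; [|split].
        - mem.
        - apply nN; auto. apply sgM; auto.
        - gsg. replace (s ⋅ (x ⋅ ginv s)) with x. reflexivity.
          rewrite <- mA, cx. now rewrite mKVr. }
      subst x'. apply hAN; auto.
      replace (ginv (x ⋅ y') ⋅ (s ⋅ (x ⋅ y))) with (ginv y' ⋅ (s ⋅ y)).
      * apply sgM; auto. now apply sgV. apply sgM; auto.
      * gsg. rewrite <- (mA s x y), cx. gsg. reflexivity.
    + assert (Bs : B0 s) by auto.
      destruct (hvf (s, x) hs hx) as [x'' [y2 [hx'' [hy2 [hv ev]]]]]. simpl in ev.
      assert (Ay2 : A0 y2) by auto. assert (Bx'' : B0 x'') by auto.
      assert (x'' = x').
      { apply (pw_uniq (AN A0 N) X); auto. unfold eqv.
        exists (y2 ⋅ y ⋅ ginv y'),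
          ((y' ⋅ ginv y) ⋅ vf (s, x) ⋅ ginv (y' ⋅ ginv y) ⋅ (y' ⋅ ginv (ginv (x' ⋅ y') ⋅ (s ⋅ (x ⋅ y))) ⋅ ginv y')).
        split; [|split].
        - apply sgM; auto. apply sgM; auto. now apply sgV.
        - apply sgM; auto.
          + apply nN; auto. apply sgM; auto. apply sgV; auto.
          + apply nN; auto. apply sgV; auto.
        - rewrite ev. gsg. reflexivity. }
      subst x''.
      assert (hb : ginv x' ⋅ (s ⋅ x) ⋅ y = y ⋅ (ginv x' ⋅ (s ⋅ x))).
      { symmetry. apply comm; auto. apply sgM. auto. apply sgV; auto. apply sgM; auto. }
      assert (eu : ginv (x' ⋅ y') ⋅ (s ⋅ (x ⋅ y)) = (ginv y' ⋅ y ⋅ y2) ⋅ vf (s, x)).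
      { rewrite ev. gsg. f_equal. rewrite <- hb. gsg. reflexivity. }
      rewrite eu. apply sgM. apply gen_sg.
      * apply hAN.
        -- apply sgM; auto. apply sgM; auto. now apply sgV.
        -- replace (ginv y' ⋅ y ⋅ y2) with ((ginv y' ⋅ y ⋅ y2 ⋅ vf (s, x)) ⋅ ginv (vf (s, x))).
           apply sgM; auto. rewrite <- eu. exact e. now apply sgV. now rewrite mKVr.
      * apply hV. apply in_map. now apply in_prod.
Qed.
End CoreSec.
End Core.
Section Final.
Context {G : group}.

Lemma least_nat (P : nat -> Prop) n : P n -> exists m, P m /\ forall k, P k -> m <= k.
Proof.
  revert P. induction n as [n IH] using (well_founded_induction lt_wf). intros P hn.
  destruct (classic (exists k, k < n /\ P k)) as [[k [hk pk]]|nk].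
  - exact (IH k hk P pk).
  - exists n. split; auto. intros k pk. destruct (Nat.lt_ge_cases k n); auto. exfalso; eauto.
Qed.

Lemma min_gens_ex (H : G -> Prop) E : generates G H E -> exists k, min_gens G H k /\ k <= length E.
Proof.
  intro hE. destruct (least_nat (fun k => exists S, length S = k /\ generates G H S) (length E)) as [m [[S [hS gS]] hm]].
  - eauto.
  - exists m. split. split. eauto. intros S' g'. apply hm. eauto. apply hm. eauto.
Qed.

Lemma real_bound (k n a b c R : nat) : k <= a -> b <= n -> 0 < b -> 0 < R -> R * a <= c * b ->
  ((INR k - 1) / INR n <= INR c / INR R)%R.
Proof.
  intros h1 h2 h3 h4 h5.
  apply le_INR in h1. apply le_INR in h2. apply lt_INR in h3. apply lt_INR in h4. apply le_INR in h5.
  rewrite !mult_INR in h5. simpl in h3, h4.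
  assert (hn : (0 < INR n)%R) by lra.
  assert (hc : (0 <= INR c)%R) by apply pos_INR.
  set (x := ((INR k - 1) / INR n)%R).
  assert (hx : (x * INR n = INR k - 1)%R) by (unfold x; field; lra).
  apply Rmult_le_reg_r with (INR R); auto.
  unfold Rdiv at 1. rewrite Rmult_assoc, Rinv_l, Rmult_1_r by lra.
  destruct (Rle_or_lt x 0) as [hx0|hx0].
  - assert (0 <= INR c)%R by apply pos_INR. nra.
  - apply Rmult_le_reg_r with (INR b); auto.
    assert (x * INR R * INR b <= x * INR R * INR n)%R by (apply Rmult_le_compat_l; nra).
    nra.
Qed.

Lemma rg_zero (K : G -> Prop) c : infinite_group G -> sg K -> (exists LK, covon K LK (fun _ => True)) ->
  (forall R, exists H E T, sg H /\ generates G H E /\ pw H T /\ (forall t, In t T -> K t) /\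
     covon H T K /\ R * length E <= c * length T) ->
  rank_gradient G = Finite 0.
Proof.
  intros Ginf SK [LK cK] HF.
  assert (member : forall R, 0 < R -> exists r, (exists (H : G -> Prop) (n k : nat),
      is_subgroup G H /\ has_index G H n /\ min_gens G H k /\ r = ((INR k - 1) / INR n)%R) /\ (r <= INR c / INR R)%R).
  { intros R hR. destruct (HF R) as [H [E [T [SH [gE [Tpw [TK [Tcov hRE]]]]]]]].
    assert (cov : covon H (prodl LK T) (fun _ => True)).
    { intros g _. destruct (cK g I) as [r [hr er]]. destruct (Tcov _ er) as [t [ht et]].
      exists (r ⋅ t). split. apply in_map_iff. exists (r, t). split; auto. now apply in_prod.
      unfold eqv in *. now rewrite invM, mA. }
    destruct (transversal H (fun _ => True) (prodl LK T) gone) as [T' [_ [_ [T'pw T'cov]]]]; auto.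
    assert (hi := has_index_of H T' SH T'pw T'cov).
    destruct (min_gens_ex H E gE) as [k [mk hk]].
    assert (hTT : length T <= length T').
    { apply pigeon with H; auto. }
    assert (hT : 0 < length T).
    { destruct (Tcov gone (sg1 K SK)) as [t [ht _]]. destruct T; [destruct ht|simpl; lia]. }
    exists ((INR k - 1) / INR (length T'))%R. split.
    - exists H, (length T'), k. auto.
    - apply real_bound with (length E) (length T); auto. }
  assert (lb : forall r, (exists (H : G -> Prop) (n k : nat),
      is_subgroup G H /\ has_index G H n /\ min_gens G H k /\ r = ((INR k - 1) / INR n)%R) -> (0 <= r)%R).
  { intros r [H [n [k [SH [hi [[[S [hS gS]] _] ->]]]]]].
    destruct (has_index_pw H n SH hi) as [T [hT [_ Tcov]]].
    assert (n > 0).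
    { destruct (Tcov gone I) as [t [ht _]]. subst n. destruct T; [destruct ht|simpl; lia]. }
    assert (k > 0).
    { destruct k as [|k]; [|lia]. exfalso. destruct S; [|discriminate].
      apply Ginf. exists T. intros g _. destruct (Tcov g I) as [t [ht et]].
      assert (e1 : ginv t ⋅ g = gone).
      { destruct gS as [_ gS]. apply gS in et. apply (gen_min nil (fun x => x = gone)); auto.
        split; [|split]; auto. intros x y -> ->; apply m1l. intros x ->; apply inv1.
        intros s []. }
      replace g with t; auto. rewrite <- (mK t g), e1. now rewrite m1r. }
    assert (h1 : (INR 1 <= INR k)%R) by (apply le_INR; lia).
    assert (h0 : (INR 1 <= INR n)%R) by (apply le_INR; lia). simpl in h0, h1.
    apply Rdiv_le_0_compat; lra. }
  apply is_glb_Rbar_unique. split.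
  - intros x hx. simpl. now apply lb.
  - intros b hb. destruct b as [b| |]; simpl; auto.
    + destruct (Rle_or_lt b 0) as [h|h]; auto. exfalso.
      assert (hc : (0 < b / (INR c + 1))%R).
      { apply Rdiv_lt_0_compat; auto. pose proof (pos_INR c); lra. }
      destruct (archimed_cor1 _ hc) as [R [hR1 hR2]].
      destruct (member R hR2) as [r [hr hrc]].
      specialize (hb r hr). simpl in hb.
      assert (hRp : (0 < INR R)%R) by (apply lt_INR in hR2; simpl in hR2; lra).
      assert (INR c / INR R < b)%R.
      { assert (hc1 : (0 < INR c + 1)%R) by (pose proof (pos_INR c); lra).
        apply Rmult_lt_compat_l with (r := (INR c + 1)%R) in hR1; auto.
        replace ((INR c + 1) * (b / (INR c + 1)))%R with b in hR1 by (field; lra).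
        unfold Rdiv in *.
        assert (INR c * / INR R <= (INR c + 1) * / INR R)%R.
        { apply Rmult_le_compat_r. left; now apply Rinv_0_lt_compat. lra. }
        lra. }
      lra.
    + destruct (member 1 Nat.lt_0_1) as [r [hr _]]. specialize (hb r hr). exact hb.
Qed.
End Final.
Section Tools.
Context {G : group}.

Definition gd (N : G -> Prop) := is_normal G N /\ exists l, covon N l (fun _ => True).
Definition NK (K N : G -> Prop) g := N g /\ K g.

Lemma gd_top : gd (fun _ => True).
Proof.
  split. split. split; auto. auto. exists (gone :: nil). intros g _. exists gone. split. now left. exact I.
Qed.

Lemma gd_inter N1 N2 : gd N1 -> gd N2 -> gd (fun g => N1 g /\ N2 g).
Proof.
  intros [[S1 n1] [l1 c1]] [[S2 n2] [l2 c2]]. split. split.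
  - split; [|split]. split; now apply sg1. intros x y [] []; split; now apply sgM.
    intros x []; split; now apply sgV.
  - intros g x []; split; auto.
  - apply cov_inter with l1 l2; auto.
Qed.

Lemma rf_avoid : residually_finite G -> forall l, (forall g, In g l -> g <> gone) ->
  exists N, gd N /\ forall g, In g l -> ~ N g.
Proof.
  intros rf l. induction l as [|a l IH]; intros hl.
  - exists (fun _ => True). split. apply gd_top. intros g [].
  - destruct IH as [N [gN hN]]. intros; apply hl; now right.
    destruct (rf a) as [N1 [n1 [[k hk] h1]]]. apply hl; now left.
    assert (S1 : sg N1) by apply n1.
    destruct (has_index_pw N1 k S1 hk) as [T [_ [_ cT]]].
    exists (fun g => N1 g /\ N g). split. apply gd_inter; auto. split; auto. eauto.
    intros g [<-|hg] [h h']; auto. apply (hN g); auto.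
Qed.

Lemma NK_props (K N : G -> Prop) : sg K -> gd N ->
  sg (NK K N) /\ nrm K (NK K N) /\ exists l, (forall x, In x l -> K x) /\ covon (NK K N) l K.
Proof.
  intros SK [[SN nN] [l cl]]. split; [|split].
  - split; [|split]. split; now apply sg1. intros x y [] []; split; now apply sgM.
    intros x []; split; now apply sgV.
  - intros k n hk [hn hn']. split. now apply nN. mem.
  - destruct (cov_restrict N l K SN cl) as [l' [hl' cl']]. exists l'. split; auto.
    intros g kg. destruct (cl' g kg) as [r [hr e]]. exists r. split; auto. split; auto. mem.
Qed.

Fixpoint pw_ (a : G) (n : nat) : G := match n with 0 => gone | S n => a ⋅ pw_ a n end.

Lemma pow_add a i j : pw_ a (i + j) = pw_ a i ⋅ pw_ a j.
Proof. induction i as [|i IH]; simpl. now rewrite m1l. now rewrite IH, mA. Qed.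

Lemma pow_comm a i : a ⋅ pw_ a i = pw_ a i ⋅ a.
Proof. induction i as [|i IH]; simpl. now rewrite m1l, m1r. rewrite (mA a (pw_ a i) a), <- IH. reflexivity. Qed.

Lemma pow_conj (W : G -> Prop) a : (forall w, W w -> W (a ⋅ w ⋅ ginv a)) ->
  forall i w, W w -> W (pw_ a i ⋅ w ⋅ ginv (pw_ a i)).
Proof.
  intros h i. induction i as [|i IH]; intros w hw; simpl.
  - now rewrite m1l, inv1, m1r.
  - specialize (h _ (IH w hw)). gs. exact h.
Qed.

Lemma pow_conj' (W : G -> Prop) a : (forall w, W w -> W (ginv a ⋅ w ⋅ a)) ->
  forall i w, W w -> W (ginv (pw_ a i) ⋅ w ⋅ pw_ a i).
Proof.
  intros h i. induction i as [|i IH]; intros w hw; simpl.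
  - now rewrite m1r, inv1, m1l.
  - replace (ginv (a ⋅ pw_ a i) ⋅ w ⋅ (a ⋅ pw_ a i)) with (ginv (pw_ a i) ⋅ (ginv a ⋅ w ⋅ a) ⋅ pw_ a i)
      by (gsg; reflexivity). apply IH. now apply h.
Qed.

Lemma pow_span (W : G -> Prop) a m : sg W -> 0 < m -> W (pw_ a m) ->
  (forall w, W w -> W (a ⋅ w ⋅ ginv a)) -> (forall w, W w -> W (ginv a ⋅ w ⋅ a)) ->
  sg (fun g => exists i w, i < m /\ W w /\ g = pw_ a i ⋅ w).
Proof.
  intros SW hm hW c1 c2. split; [|split].
  - exists 0, gone. split; auto. split. now apply sg1. simpl. now rewrite m1l.
  - intros g h [i [w [hi [hw ->]]]] [j [w' [hj [hw' ->]]]].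
    assert (e : pw_ a i ⋅ w ⋅ (pw_ a j ⋅ w') = pw_ a (i + j) ⋅ ((ginv (pw_ a j) ⋅ w ⋅ pw_ a j) ⋅ w')).
    { rewrite pow_add. gsg. reflexivity. }
    assert (Wc : W ((ginv (pw_ a j) ⋅ w ⋅ pw_ a j) ⋅ w')).
    { apply sgM; auto. apply pow_conj'; auto. }
    rewrite e. destruct (Nat.lt_ge_cases (i + j) m) as [h|h].
    + exists (i + j), ((ginv (pw_ a j) ⋅ w ⋅ pw_ a j) ⋅ w'). auto.
    + exists (i + j - m), (pw_ a m ⋅ ((ginv (pw_ a j) ⋅ w ⋅ pw_ a j) ⋅ w')). split; [lia|split].
      * apply sgM; auto.
      * replace (i + j) with ((i + j - m) + m) at 1 by lia. rewrite pow_add. now rewrite mA.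
  - intros g [i [w [hi [hw ->]]]]. destruct i as [|i].
    + exists 0, (ginv w). split; auto. split. now apply sgV. simpl. now rewrite !m1l.
    + exists (m - S i), ((ginv (pw_ a (m - S i)) ⋅ ginv w ⋅ pw_ a (m - S i)) ⋅ ginv (pw_ a m)).
      split; [lia|split].
      * apply sgM; [auto| |now apply sgV]. apply pow_conj'; auto. now apply sgV.
      * assert (em : pw_ a m = pw_ a (S i) ⋅ pw_ a (m - S i)) by (rewrite <- pow_add; f_equal; lia).
        rewrite em. gsg. reflexivity.
Qed.

Lemma centr_sg (b : G) : sg (fun g => g ⋅ b = b ⋅ g).
Proof.
  split; [|split].
  - now rewrite m1l, m1r.
  - intros x y hx hy. now rewrite mA, hy, <- mA, hx, mA.
  - intros x hx. apply (mcancel x). rewrite mK, <- mA, hx, mKVr. reflexivity.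
Qed.

Lemma inf_list (Z : G -> Prop) : infinite_set G Z -> forall R, exists l, NoDup l /\ length l = R /\ forall x, In x l -> Z x.
Proof.
  intros hZ R. induction R as [|R [l [nd [hl hz]]]].
  - exists nil. repeat split; auto. constructor. intros _ [].
  - destruct (classic (exists z, Z z /\ ~ In z l)) as [[z [zz nz]]|n].
    + exists (z :: l). split. constructor; auto. split. simpl; lia. intros x [<-|hx]; auto.
    + exfalso. apply hZ. exists l. intros x zx. apply NNPP. intro h. apply n. eauto.
Qed.

Lemma not_inf (Z : G -> Prop) : ~ infinite_set G Z -> exists l, forall x, Z x -> In x l.
Proof. intro h. now apply NNPP in h. Qed.

Definition good_out (K : G -> Prop) c := forall R, exists H E T, sg H /\ generates G H E /\ pw H T /\
  (forall t, In t T -> K t) /\ covon H T K /\ R * length E <= c * length T.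

End Tools.
Section ToolP.
Context {G : group}.

Lemma setup_X (K A0 B0 N : G -> Prop) l : sg K -> sg A0 -> sg B0 -> sg N -> (forall g, A0 g -> K g) ->
  (forall g, B0 g -> K g) -> nrm K N -> covon N l K ->
  (forall a b, A0 a -> B0 b -> a ⋅ b = b ⋅ a) -> (forall k, K k -> exists a b, A0 a /\ B0 b /\ k = a ⋅ b) ->
  exists X, (forall x, In x X -> B0 x) /\ In gone X /\ pw (AN A0 N) X /\ covon (AN A0 N) X K.
Proof.
  intros SK SA SB SN AK BK nN lc comm dec.
  assert (SAN := AN_sg K A0 N SK SA SN AK nN).
  destruct (transversal (AN A0 N) B0 l gone) as [X [XB [X1 [Xpw Xc]]]]; auto.
  - intros g bg. destruct (lc g (BK g bg)) as [r [hr e]]. exists r. split; auto.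
    apply eqv_mono with N; auto. intros; now apply AN_N.
  - now apply sg1.
  - exists X. split; [auto|split; [auto|split; [auto|]]]. intros k hk. destruct (dec k hk) as [a [b [ha [hb ->]]]].
    destruct (Xc b hb) as [x [hx e]]. exists x. split; auto. unfold eqv in *.
    assert (cx : a ⋅ ginv x = ginv x ⋅ a) by (apply comm; auto; apply sgV; auto).
    rewrite <- mA, <- cx, mA. apply sgM; auto. now apply AN_A.
Qed.

Lemma toolP (K A0 B0 : G -> Prop) SA SB :
  sg K -> sg A0 -> sg B0 -> (forall g, A0 g -> K g) -> (forall g, B0 g -> K g) ->
  (forall a b, A0 a -> B0 b -> a ⋅ b = b ⋅ a) -> generates G K (SA ++ SB) -> generates G A0 SA ->
  (forall s, In s SB -> B0 s) -> (forall k, K k -> exists a b, A0 a /\ B0 b /\ k = a ⋅ b) ->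
  (forall R, exists N, gd N /\
     (exists l1, (forall x, In x l1 -> K x) /\ pw (AN A0 (NK K N)) l1 /\ R <= length l1) /\
     (exists l2, (forall x, In x l2 -> A0 x) /\ pw (NK K N) l2 /\ R <= length l2)) ->
  good_out K (length SA + length SB).
Proof.
  intros SK SA0 SB0 AK BK comm Kgen Agen SBB dec C1 R.
  destruct (C1 R) as [N [gN [[l1 [l1K [l1pw hl1]]] [l2 [l2A [l2pw hl2]]]]]].
  destruct (NK_props K N SK gN) as [SN [nN [l [lK lc]]]].
  set (Nk := NK K N) in *.
  assert (NkK : forall g, Nk g -> K g) by (intros g []; auto).
  assert (SAN := AN_sg K A0 Nk SK SA0 SN AK nN).
  destruct (setup_X K A0 B0 Nk l) as [X [XB [X1 [Xpw Xcov]]]]; auto.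
  destruct (transversal Nk A0 l gone) as [Y [YA [Y1 [Ypw Ycov]]]]; auto. now apply sg1.
  assert (SAl : forall s, In s SA -> A0 s) by apply Agen.
  destruct (core K A0 B0 Nk X Y SK SA0 SB0 SN AK BK NkK nN comm XB X1 Xpw Xcov YA Y1 Ypw Ycov SA SB Kgen SAl SBB)
    as [V [hVl [hVN hVgen]]].
  assert (SAN' : sg (fun g => A0 g /\ Nk g)).
  { split; [|split]. split; now apply sg1. intros x y [] []; split; now apply sgM. intros x []; split; now apply sgV. }
  destruct (schreier A0 (fun g => A0 g /\ Nk g) SA Y) as [UA [hUl [hUf hUg]]]; auto.
  { intros h []; auto. }
  { apply pw_mono with Nk; auto. intros g []; auto. }
  { intros a ha. destruct (Ycov a ha) as [y [hy e]]. exists y. split; auto. split; auto.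
    apply sgM; auto. apply sgV; auto. }
  destruct (prodl_props K A0 B0 Nk X Y SK SA0 SN AK BK nN XB X1 Xpw Xcov YA Y1 Ypw Ycov) as [Tl [TK [_ [Tpw Tcov]]]].
  exists Nk, (UA ++ V), (prodl X Y). split; auto. split; [|split; [auto|split; [auto|split; [auto|]]]].
  - split.
    + intros s hs. apply in_app_or in hs as [hs|hs]; auto.
      destruct (hUf s hs) as [a [t [t' [_ [_ [_ [e ->]]]]]]]. apply e.
    + intro x. split.
      * intro hx. apply hVgen; auto.
        -- intros v hv. apply gen_in. apply in_or_app; auto.
        -- intros a ha hn. apply gen_app_l. apply hUg; auto.
      * apply gen_min; auto. intros s hs. apply in_app_or in hs as [hs|hs]; auto.
        destruct (hUf s hs) as [a [t [t' [_ [_ [_ [e ->]]]]]]]. apply e.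
  - assert (hX : length l1 <= length X).
    { apply pigeon with (AN A0 Nk); auto; intros a ha; apply Xcov; auto. }
    assert (hY : length l2 <= length Y).
    { apply pigeon with Nk; auto; intros a ha; apply Ycov; auto. }
    rewrite length_app, hUl, hVl, Tl. nia.
Qed.
End ToolP.
Section ToolC.
Context {G : group}.

Lemma pow_in (H : G -> Prop) a i : sg H -> H a -> H (pw_ a i).
Proof. intros SH ha. induction i; simpl. now apply sg1. now apply sgM. Qed.

Lemma span_a (W : G -> Prop) a m : sg W -> 0 < m -> W (pw_ a m) ->
  exists i w, i < m /\ W w /\ a = pw_ a i ⋅ w.
Proof.
  intros SW hm hW. destruct (Nat.eq_dec m 1) as [->|h].
  - exists 0, a. simpl in *. rewrite m1r in hW. split; auto. split; auto. now rewrite m1l.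
  - exists 1, gone. split; [lia|split; [now apply sg1|]]. simpl. now rewrite !m1r.
Qed.

Lemma pow_minus (a : G) i j : i <= j -> ginv (pw_ a i) ⋅ pw_ a j = pw_ a (j - i).
Proof. intro h. replace j with (i + (j - i)) at 1 by lia. rewrite pow_add. apply mKV. Qed.

Lemma toolCyc (K : G -> Prop) Sl z : residually_finite G -> sg K -> generates G K Sl -> K z ->
  (forall k, K k -> z ⋅ k = k ⋅ z) -> (forall m, 0 < m -> pw_ z m <> gone) -> good_out K (length Sl + 1).
Proof.
  intros rf SK Kgen Kz zc zinf R.
  destruct (rf_avoid rf (map (pw_ z) (seq 1 R))) as [N [gN hN]].
  { intros g hg. apply in_map_iff in hg as [i [<- hi]]. apply in_seq in hi. apply zinf. lia. }
  destruct (NK_props K N SK gN) as [SN [nN [l [lK lc]]]].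
  set (Nk := NK K N) in *.
  assert (NkK : forall g, Nk g -> K g) by (intros g []; auto).
  assert (ex : exists d, 0 < d /\ Nk (pw_ z d)).
  { apply NNPP. intro nex.
    assert (key : forall i j, i < j -> ~ Nk (ginv (pw_ z i) ⋅ pw_ z j)).
    { intros i j hij hN'. apply nex. exists (j - i). split. lia. now rewrite <- pow_minus by lia. }
    assert (key2 : forall i j, eqv Nk (pw_ z i) (pw_ z j) -> pw_ z i = pw_ z j).
    { intros i j e. destruct (Nat.lt_trichotomy i j) as [h|[->|h]]; auto.
      - exfalso. exact (key i j h e).
      - exfalso. exact (key j i h (eqv_sym _ _ _ SN e)). }
    assert (pwP : pw Nk (map (pw_ z) (seq 0 (S (length l))))).
    { split.
      - apply nodup_map_inj. apply seq_NoDup. intros i j hi hj e. apply in_seq in hi, hj.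
        destruct (Nat.lt_trichotomy i j) as [h|[->|h]]; auto; exfalso.
        + apply (key i j h). rewrite e, mVl. now apply sg1.
        + apply (key j i h). rewrite e, mVl. now apply sg1.
      - intros a b ha hb e. apply in_map_iff in ha as [i [<- _]]. apply in_map_iff in hb as [j [<- _]]. auto. }
    assert (h := pigeon Nk _ l SN pwP).
    rewrite length_map, length_seq in h.
    assert (S (length l) <= length l); [|lia].
    apply h. intros a ha. apply lc. apply in_map_iff in ha as [i [<- _]]. now apply pow_in. }
  destruct ex as [d hd]. destruct (least_nat (fun d => 0 < d /\ Nk (pw_ z d)) d hd) as [q [[hq0 hqN] hqmin]].
  assert (hqR : R < q).
  { destruct (Nat.lt_ge_cases R q) as [h|h]; auto. exfalso. apply (hN (pw_ z q)).
    apply in_map. apply in_seq. lia. apply hqN. }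
  assert (key : forall i j, i < q -> j < q -> eqv Nk (pw_ z i) (pw_ z j) -> i = j).
  { intros i j hi hj e. destruct (Nat.lt_trichotomy i j) as [h|[->|h]]; auto; exfalso.
    - unfold eqv in e. rewrite pow_minus in e by lia. assert (hd' : 0 < j - i) by lia. specialize (hqmin (j - i) (conj hd' e)). lia.
    - apply eqv_sym in e; auto. unfold eqv in e. rewrite pow_minus in e by lia.
      assert (hd' : 0 < i - j) by lia. specialize (hqmin (i - j) (conj hd' e)). lia. }
  set (A0 := generated G (z :: nil)).
  assert (SA0 : sg A0) by apply gen_sg.
  assert (AK : forall g, A0 g -> K g). { intros g hg. apply (gen_min (z :: nil)); auto. intros s [<-|[]]; auto. }
  assert (comm : forall a b, A0 a -> K b -> a ⋅ b = b ⋅ a).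
  { intros a b ha hb. apply (gen_min (z :: nil) (fun g => g ⋅ b = b ⋅ g)); auto. apply centr_sg.
    intros s [<-|[]]; auto. }
  set (Y := map (pw_ z) (seq 0 q)).
  assert (YA : forall y, In y Y -> A0 y).
  { intros y hy. apply in_map_iff in hy as [i [<- _]]. apply pow_in; auto. apply gen_in. now left. }
  assert (Y1 : In gone Y). { apply in_map_iff. exists 0. split; auto. apply in_seq. lia. }
  assert (Ypw : pw Nk Y).
  { split.
    - apply nodup_map_inj. apply seq_NoDup. intros i j hi hj e. apply in_seq in hi, hj.
      apply key; try lia. rewrite e. now apply eqv_refl.
    - intros a b ha hb e. apply in_map_iff in ha as [i [<- hi]]. apply in_map_iff in hb as [j [<- hj]].
      apply in_seq in hi, hj. f_equal. apply key; auto; lia. }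
  assert (Ycov : covon Nk Y A0).
  { assert (SP := pow_span Nk z q SN hq0 hqN (fun w hw => nN z w Kz hw) (fun w hw => nrm' K Nk z w SK nN Kz hw)).
    intros a ha. destruct (gen_min (z :: nil) _ a SP) as [i [w [hi [hw ->]]]]; auto.
    - intros s [<-|[]]. now apply span_a.
    - exists (pw_ z i). split. apply in_map. apply in_seq. lia. unfold eqv. now rewrite mKV. }
  destruct (setup_X K A0 K Nk l) as [X [XB [X1 [Xpw Xcov]]]]; auto.
  { intros k hk. exists gone, k. split. now apply sg1. split; auto. now rewrite m1l. }
  assert (SA0s : forall s, In s nil -> A0 s) by (intros s []).
  assert (Kgen' : generates G K (nil ++ Sl)) by exact Kgen.
  assert (SBB : forall s, In s Sl -> K s) by apply Kgen.
  destruct (core K A0 K Nk X Y SK SA0 SK SN AK (fun g h => h) NkK nN comm XB X1 Xpw Xcov YA Y1 Ypw Ycov nil Sl Kgen' SA0s SBB)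
    as [V [hVl [hVN hVgen]]].
  assert (SAN' : sg (fun g => A0 g /\ Nk g)).
  { split; [|split]. split; now apply sg1. intros x y [] []; split; now apply sgM. intros x []; split; now apply sgV. }
  destruct (schreier A0 (fun g => A0 g /\ Nk g) (z :: nil) Y) as [UA [_ [hUf hUg]]]; auto.
  { intros h []; auto. }
  { apply generates_gen. }
  { apply pw_mono with Nk; auto. intros g []; auto. }
  { intros a ha. destruct (Ycov a ha) as [y [hy e]]. exists y. split; auto. split; auto.
    apply sgM; auto. apply sgV; auto. }
  assert (hU : forall u, In u UA -> u = gone \/ u = pw_ z q).
  { intros u hu. destruct (hUf u hu) as [s [t [t' [[<-|[]] [ht [ht' [[_ e] ->]]]]]]].
    apply in_map_iff in ht as [i [<- hi]]. apply in_map_iff in ht' as [j [<- hj]]. apply in_seq in hi, hj.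
    change (z ⋅ pw_ z i) with (pw_ z (S i)) in *.
    destruct (Nat.eq_dec (S i) q) as [hiq|hiq].
    - right. rewrite hiq in *. assert (j = 0).
      { apply key; try lia. unfold eqv in *. simpl. rewrite m1r.
        replace (ginv (pw_ z j)) with ((ginv (pw_ z j) ⋅ pw_ z q) ⋅ ginv (pw_ z q)) by apply mKVr.
        apply sgM; auto. now apply sgV. }
      subst j. simpl. now rewrite inv1, m1l.
    - left. assert (j = S i) by (apply key; auto; lia). subst j. apply mVl. }
  destruct (prodl_props K A0 K Nk X Y SK SA0 SN AK (fun g h => h) nN XB X1 Xpw Xcov YA Y1 Ypw Ycov) as [Tl [TK [_ [Tpw Tcov]]]].
  exists Nk, (pw_ z q :: V), (prodl X Y). split; auto. split; [|split; [auto|split; [auto|split; [auto|]]]].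
  - split.
    + intros s [<-|hs]; auto.
    + intro x. split.
      * intro hx. apply hVgen; auto.
        -- intros v hv. apply gen_in. now right.
        -- intros a ha hn. apply (gen_mono UA). intros u hu. destruct (hU u hu) as [->| ->].
           ++ apply sg1, gen_sg.
           ++ apply gen_in. now left.
           ++ apply hUg; auto.
      * apply gen_min; auto. intros s [<-|hs]; auto.
  - assert (hX : 1 <= length X) by (destruct X; [destruct X1|simpl; lia]).
    simpl. rewrite hVl, Tl. unfold Y. rewrite length_map, length_seq. nia.
Qed.

Lemma fin_gen (K : G -> Prop) : sg K -> forall l, (forall a, In a l -> K a /\ (forall k, K k -> a ⋅ k = k ⋅ a) /\
  exists m, 0 < m /\ pw_ a m = gone) -> exists FL, forall g, generated G l g -> In g FL.
Proof.
  intros SK l. induction l as [|a l IH]; intros hl.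
  - exists (gone :: nil). intros g hg. left. symmetry. apply (gen_min nil (fun x => x = gone)); auto.
    split; [|split]; auto. intros x y -> ->; apply m1l. intros x ->; apply inv1. intros s [].
  - destruct IH as [FL0 hFL0]. intros; apply hl; now right.
    destruct (hl a (or_introl eq_refl)) as [Ka [ca [m [hm am]]]].
    set (W := generated G l).
    assert (SW : sg W) by apply gen_sg.
    assert (WK : forall w, W w -> K w). { intros w hw. apply (gen_min l); auto. intros s hs. apply hl; now right. }
    assert (P := pow_span W a m SW hm).
    destruct P as [S1 [S2 S3]].
    + rewrite am. now apply sg1.
    + intros w hw. rewrite (ca w (WK w hw)). now rewrite mKVr.
    + intros w hw. rewrite mA, <- (ca w (WK w hw)). now rewrite mKV.
    + exists (flat_map (fun i => map (fun f => pw_ a i ⋅ f) FL0) (seq 0 m)).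
      intros g hg. apply (gen_min (a :: l) (fun g => exists i w, i < m /\ W w /\ g = pw_ a i ⋅ w)) in hg.
      * destruct hg as [i [w [hi [hw ->]]]]. apply in_flat_map. exists i. split. apply in_seq; lia.
        apply in_map. now apply hFL0.
      * split; [|split]; auto.
      * intros s [<-|hs].
        -- apply span_a; auto. rewrite am. now apply sg1.
        -- exists 0, s. split; auto. split. now apply gen_in. simpl. now rewrite m1l.
Qed.

Lemma toolTor (K Z : G -> Prop) Sl : residually_finite G -> sg K -> generates G K Sl -> (forall z, Z z -> K z) ->
  (forall z k, Z z -> K k -> z ⋅ k = k ⋅ z) -> infinite_set G Z ->
  (forall z, Z z -> exists m, 0 < m /\ pw_ z m = gone) -> good_out K (length Sl).
Proof.
  intros rf SK Kgen ZK zc Zinf ztor R.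
  destruct (inf_list Z Zinf R) as [lz [lznd [lzl lzZ]]].
  set (F := generated G lz).
  assert (SF : sg F) by apply gen_sg.
  destruct (fin_gen K SK lz) as [FL hFL].
  { intros a ha. split; [|split]; auto. }
  assert (FK : forall g, F g -> K g). { intros g hg. apply (gen_min lz); auto. }
  assert (comm : forall a b, F a -> K b -> a ⋅ b = b ⋅ a).
  { intros a b ha hb. apply (gen_min lz (fun g => g ⋅ b = b ⋅ g)); auto. apply centr_sg. }
  destruct (rf_avoid rf (filter (fun g => if excluded_middle_informative (g = gone) then false else true) FL))
    as [N [gN hN]].
  { intros g hg. apply filter_In in hg as [_ hg]. destruct excluded_middle_informative; congruence. }
  assert (FN : forall f, F f -> N f -> f = gone).
  { intros f hf hn. apply NNPP. intro ne. apply (hN f); auto. apply filter_In. split. now apply hFL.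
    destruct excluded_middle_informative; tauto. }
  destruct (NK_props K N SK gN) as [SN [nN [l [lK lc]]]].
  set (Nk := NK K N) in *.
  assert (NkK : forall g, Nk g -> K g) by (intros g []; auto).
  destruct (transversal Nk F l gone) as [Y [YA [Y1 [Ypw Ycov]]]]; auto. now apply sg1.
  destruct (setup_X K F K Nk l) as [X [XB [X1 [Xpw Xcov]]]]; auto.
  { intros k hk. exists gone, k. split. now apply sg1. split; auto. now rewrite m1l. }
  assert (SA0s : forall s, In s nil -> F s) by (intros s []).
  assert (Kgen' : generates G K (nil ++ Sl)) by exact Kgen.
  assert (SBB : forall s, In s Sl -> K s) by apply Kgen.
  destruct (core K F K Nk X Y SK SF SK SN FK (fun g h => h) NkK nN comm XB X1 Xpw Xcov YA Y1 Ypw Ycov nil Sl Kgen' SA0s SBB)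
    as [V [hVl [hVN hVgen]]].
  destruct (prodl_props K F K Nk X Y SK SF SN FK (fun g h => h) nN XB X1 Xpw Xcov YA Y1 Ypw Ycov) as [Tl [TK [_ [Tpw Tcov]]]].
  exists Nk, V, (prodl X Y). split; auto. split; [|split; [auto|split; [auto|split; [auto|]]]].
  - split; auto. intro x. split.
    + intro hx. apply hVgen; auto.
      * intros v hv. now apply gen_in.
      * intros a ha [hn _]. rewrite (FN a ha hn). apply sg1, gen_sg.
    + apply gen_min; auto.
  - assert (hY : length lz <= length Y).
    { apply pigeon with Nk; auto.
      - split; auto. intros a b ha hb [e _]. assert (ginv a ⋅ b = gone).
        { apply FN; auto. apply sgM; auto. apply sgV; auto; apply gen_in; auto. apply gen_in; auto. }
        rewrite <- (mK a b), H. symmetry; apply m1r.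
      - intros a ha. apply Ycov. now apply gen_in. }
    rewrite hVl, Tl. nia.
Qed.
End ToolC.
Section Main.
Context {G : group}.

Lemma central (K Z : G -> Prop) Sl : residually_finite G -> sg K -> generates G K Sl -> (forall z, Z z -> K z) ->
  (forall z k, Z z -> K k -> z ⋅ k = k ⋅ z) -> infinite_set G Z -> exists c, good_out K c.
Proof.
  intros rf SK Kgen ZK zc Zinf.
  destruct (classic (exists z, Z z /\ forall m, 0 < m -> pw_ z m <> gone)) as [[z [hz hzi]]|n].
  - exists (length Sl + 1). apply toolCyc with z; auto.
  - exists (length Sl). apply toolTor with Z; auto.
    intros z hz. apply NNPP. intro h. apply n. exists z. split; auto. intros m hm e. apply h. eauto.
Qed.

Lemma AN_mono (A0 N1 N2 : G -> Prop) g : (forall x, N1 x -> N2 x) -> AN A0 N1 g -> AN A0 N2 g.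
Proof. intros h [a [n [ha [hn ->]]]]. exists a, n. auto. Qed.

Lemma pw_snoc (H : G -> Prop) (l : list G) (g : G) : sg H -> pw H l -> (forall x, In x l -> ~ eqv H x g) -> pw H (l ++ g :: nil).
Proof.
  intros SH [nd uq] hg. split.
  - apply NoDup_app; auto. constructor. intros []. constructor.
    intros x hx hin. destruct hin as [e|[]]. subst x. apply (hg g hx). now apply eqv_refl.
  - intros a b ha hb e. apply in_app_or in ha, hb.
    destruct ha as [ha|[<-|[]]]; destruct hb as [hb|[<-|[]]]; auto.
    + exfalso. exact (hg a ha e).
    + exfalso. apply (hg b hb). now apply eqv_sym.
Qed.

Lemma rf_gd N : is_normal G N -> finite_index G N -> gd N.
Proof.
  intros nN [k hk]. split; auto. destruct (has_index_pw N k (proj1 nN) hk) as [T [_ [_ cT]]]. eauto.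
Qed.

Theorem main_thm : finitely_generated G -> residually_finite G -> presentable_by_product G ->
  rank_gradient G = Finite 0.
Proof.
  intros [SG gG] rf [Ginf [G1 [G2 [phi [hom [[K [SK [fiK Kimg]]] [Ainf Binf]]]]]]].
  set (A := fun y => exists x1 : G1, phi (x1, gone) = y) in *.
  set (B := fun y => exists x2 : G2, phi (gone, x2) = y) in *.
  assert (hp : forall a b c d, phi (a, b) ⋅ phi (c, d) = phi (a ⋅ c, b ⋅ d)).
  { intros. rewrite <- hom. reflexivity. }
  assert (p1 : phi (gone, gone) = gone).
  { apply (mcancel (phi (gone, gone))). rewrite hp, !m1l, m1r. reflexivity. }
  assert (SA : sg A).
  { split; [|split].
    - exists gone. exact p1.
    - intros x y [a <-] [b <-]. exists (a ⋅ b). rewrite hp. now rewrite m1l.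
    - intros x [a <-]. exists (ginv a). symmetry. apply inv_uniq. rewrite hp, mVr, m1l. exact p1. }
  assert (SB : sg B).
  { split; [|split].
    - exists gone. exact p1.
    - intros x y [a <-] [b <-]. exists (a ⋅ b). rewrite hp. now rewrite m1l.
    - intros x [a <-]. exists (ginv a). symmetry. apply inv_uniq. rewrite hp, mVr, m1l. exact p1. }
  assert (AK : forall g, A g -> K g). { intros g [a <-]. apply Kimg. eauto. }
  assert (BK : forall g, B g -> K g). { intros g [a <-]. apply Kimg. eauto. }
  assert (commAB : forall a b, A a -> B b -> a ⋅ b = b ⋅ a).
  { intros x y [a <-] [b <-]. rewrite !hp, !m1l, !m1r. reflexivity. }
  assert (decAB : forall k, K k -> exists a b, A a /\ B b /\ k = a ⋅ b).
  { intros k hk. apply Kimg in hk as [[x1 x2] <-]. exists (phi (x1, gone)), (phi (gone, x2)).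
    split. eexists; eauto. split. eexists; eauto. rewrite hp, m1l, m1r. reflexivity. }
  destruct fiK as [n hn]. destruct (has_index_pw K n SK hn) as [T0 [_ [_ cT0]]].
  destruct (transversal K (fun _ => True) T0 gone) as [T [_ [T1 [Tpw Tcov]]]]; auto.
  assert (Stop : sg (fun _ : G => True)) by (split; auto).
  destruct (schreier (fun _ => True) K SG T Stop SK (fun _ _ => I) gG (fun _ _ => I) T1 Tpw Tcov)
    as [U [_ [hUf hUg]]].
  assert (UK : forall u, In u U -> K u).
  { intros u hu. destruct (hUf u hu) as [s [t [t' [_ [_ [_ [e ->]]]]]]]. exact e. }
  destruct (choice_fun (fun (k : G) (p : G * G) => K k -> A (fst p) /\ B (snd p) /\ k = fst p ⋅ snd p)) as [f hf].
  { intro k. destruct (classic (K k)) as [hk|hk].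
    - destruct (decAB k hk) as [a [b [ha [hb e]]]]. exists (a, b). auto.
    - exists (gone, gone). tauto. }
  set (la := map (fun k => fst (f k)) U). set (lb := map (fun k => snd (f k)) U).
  set (A0 := generated G la). set (B0 := generated G lb).
  assert (SA0 : sg A0) by apply gen_sg. assert (SB0 : sg B0) by apply gen_sg.
  assert (A0A : forall g, A0 g -> A g).
  { intros g hg. apply (gen_min la); auto. intros s hs. apply in_map_iff in hs as [k [<- hk]]. apply hf; auto. }
  assert (B0B : forall g, B0 g -> B g).
  { intros g hg. apply (gen_min lb); auto. intros s hs. apply in_map_iff in hs as [k [<- hk]]. apply hf; auto. }
  assert (A0K : forall g, A0 g -> K g) by auto. assert (B0K : forall g, B0 g -> K g) by auto.
  assert (comm : forall a b, A0 a -> B0 b -> a ⋅ b = b ⋅ a) by auto.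
  assert (Kgen : generates G K (la ++ lb)).
  { split.
    - intros s hs. apply in_app_or in hs as [hs|hs]; apply in_map_iff in hs as [k [<- hk]]; [apply AK|apply BK]; apply hf; auto.
    - intro x. split.
      + intro hx. apply (gen_mono U). 2: now apply hUg.
        intros u hu. destruct (hf u (UK u hu)) as [_ [_ ->]]. apply sgM. apply gen_sg.
        * apply gen_app_l. apply gen_in. apply in_map_iff. eauto.
        * apply gen_app_r. apply gen_in. apply in_map_iff. eauto.
      + apply gen_min; auto. intros s hs. apply in_app_or in hs as [hs|hs]; apply in_map_iff in hs as [k [<- hk]]; [apply AK|apply BK]; apply hf; auto. }
  assert (SAB : sg (fun g => exists a b, A0 a /\ B0 b /\ g = a ⋅ b)).
  { split; [|split].
    + exists gone, gone. split; [now apply sg1|split; [now apply sg1|now rewrite m1l]].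
    + intros x y [a [b [ha [hb ->]]]] [a' [b' [ha' [hb' ->]]]]. exists (a ⋅ a'), (b ⋅ b').
      split; [now apply sgM|split; [now apply sgM|]]. rewrite !mA. f_equal. rewrite <- !mA. f_equal.
      symmetry; auto.
    + intros x [a [b [ha [hb ->]]]]. exists (ginv a), (ginv b). split; [now apply sgV|split; [now apply sgV|]].
      rewrite invM. symmetry. apply comm; now apply sgV. }
  assert (dec : forall k, K k -> exists a b, A0 a /\ B0 b /\ k = a ⋅ b).
  { intros k hk. apply Kgen in hk. apply (gen_min (la ++ lb) _ k SAB); auto.
    intros s hs. apply in_app_or in hs as [hs|hs].
    + exists s, gone. split; [now apply gen_in|split; [now apply sg1|now rewrite m1r]].
    + exists gone, s. split; [now apply sg1|split; [now apply gen_in|now rewrite m1l]]. }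
  assert (LK : exists LK, covon K LK (fun _ => True)) by eauto.
  enough (hc : exists c, good_out K c).
  { destruct hc as [c hc]. apply (rg_zero K c Ginf SK LK hc). }
  set (P1 := fun N R => exists l1, (forall x, In x l1 -> K x) /\ pw (AN A0 (NK K N)) l1 /\ R <= length l1).
  set (P2 := fun N R => exists l2, (forall x, In x l2 -> A0 x) /\ pw (NK K N) l2 /\ R <= length l2).
  destruct (classic (forall R, exists N, gd N /\ P1 N R /\ P2 N R)) as [C1|nC1].
  { exists (length la + length lb). apply (toolP K A0 B0 la lb); auto. apply generates_gen. intros s hs; now apply gen_in. }
  apply not_all_ex_not in nC1 as [R0 nC1].
  assert (nC : forall N, gd N -> ~ (P1 N R0 /\ P2 N R0)). { intros N gN h. apply nC1. eauto. }
  assert (mono1 : forall N N', (forall g, N' g -> N g) -> P1 N R0 -> P1 N' R0).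
  { intros N N' h [l1 [l1K [l1pw hl1]]]. exists l1. split; auto. split; auto.
    apply pw_mono with (AN A0 (NK K N)); auto. intros g. apply AN_mono. intros x [? ?]; split; auto. }
  assert (mono2 : forall N N', (forall g, N' g -> N g) -> P2 N R0 -> P2 N' R0).
  { intros N N' h [l2 [l2K [l2pw hl2]]]. exists l2. split; auto. split; auto.
    apply pw_mono with (NK K N); auto. intros g [? ?]; split; auto. }
  destruct (classic (exists N, gd N /\ P2 N R0)) as [[N2 [gN2 hN2]]|noP2].
  - destruct (classic (exists N, gd N /\ P1 N R0)) as [[N1 [gN1 hN1]]|noP1].
    + exfalso. apply (nC (fun g => N1 g /\ N2 g)). now apply gd_inter. split.
      * apply mono1 with N1; auto. intros g []; auto.
      * apply mono2 with N2; auto. intros g []; auto.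
    +
      assert (bnd : forall N l, gd N -> (forall x, In x l -> K x) -> pw (AN A0 (NK K N)) l -> length l < R0).
      { intros N l gN lK lpw. destruct (Nat.lt_ge_cases (length l) R0); auto. exfalso. apply noP1.
        exists N. split; auto. exists l. auto. }
      set (ach := fun m => exists N l, gd N /\ (forall x, In x l -> K x) /\ In gone l /\
                   pw (AN A0 (NK K N)) l /\ length l = m).
      assert (ach1 : ach 1).
      { exists (fun _ => True), (gone :: nil). split. apply gd_top. split. intros x [<-|[]]; now apply sg1.
        split. now left. split; auto. split. constructor. intros []. constructor.
        intros a b [<-|[]] [<-|[]] _; auto. }
      assert (hR0 : 1 < R0).
      { destruct ach1 as [N [l [gN [lK [_ [lpw hl]]]]]]. rewrite <- hl. eapply bnd; eauto. }
      destruct (least_nat (fun d => ach (R0 - d)) (R0 - 1)) as [d [[Ns [Xs [gNs [XsK [Xs1 [Xspw hXs]]]]]] hd]].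
      { replace (R0 - (R0 - 1)) with 1 by lia. exact ach1. }
      assert (maxl : forall m, ach m -> m <= R0 - d).
      { intros m hm. assert (hmR : m < R0).
        { destruct hm as [N [l [gN [lK [_ [lpw hl]]]]]]. rewrite <- hl. eapply bnd; eauto. }
        assert (ha : ach (R0 - (R0 - m))) by (replace (R0 - (R0 - m)) with m by lia; exact hm).
        specialize (hd _ ha). lia. }
      assert (maxcov : forall N, gd N -> pw (AN A0 (NK K N)) Xs -> covon (AN A0 (NK K N)) Xs K).
      { intros N gN hpw g hg. apply NNPP. intro ng.
        destruct (NK_props K N SK gN) as [SNk [nNk _]].
        assert (hs : ach (S (R0 - d))).
        { exists N, (Xs ++ g :: nil). split; auto. split.
          { intros x hx; apply in_app_or in hx as [hx|[<-|[]]]; auto. }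
          split. apply in_or_app; auto. split.
          - apply pw_snoc; auto. apply AN_sg with K; auto. intros x hx e. apply ng. eauto.
          - rewrite length_app, hXs. simpl. lia. }
        specialize (maxl _ hs). lia. }
      set (L := AN A0 (NK K Ns)).
      destruct (NK_props K Ns SK gNs) as [SNs [nNs _]].
      assert (SL : sg L) by (apply AN_sg with K; auto).
      assert (inL : forall N, gd N -> forall b, K b -> L b -> AN A0 (NK K N) b).
      { intros N gN b hb hL. set (N' := fun g => N g /\ Ns g).
        assert (gN' : gd N') by (apply gd_inter; auto).
        destruct (NK_props K N' SK gN') as [SN' [nN' _]].
        assert (sub : forall g, AN A0 (NK K N') g -> L g).
        { intro g. apply AN_mono. intros x [[? ?] ?]; split; auto. }
        assert (pw' : pw (AN A0 (NK K N')) Xs) by (apply pw_mono with L; auto).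
        destruct (maxcov N' gN' pw' b hb) as [x [hx ex]].
        assert (x = gone).
        { apply (pw_uniq L Xs); auto. apply eqv_trans with b; auto. apply eqv_mono with (AN A0 (NK K N')); auto.
          unfold eqv. rewrite m1r. now apply sgV. }
        subst x. unfold eqv in ex. rewrite inv1, m1l in ex. revert ex. apply AN_mono.
        intros x [[? ?] ?]; split; auto. }
      destruct (classic (infinite_set G B0)) as [B0inf|B0fin].
      * apply (central K (fun g => B0 g /\ L g) (la ++ lb)); auto.
        -- intros z [hz _]; auto.
        -- intros z k [hzB hzL] hk. destruct (decAB k hk) as [a [b [ha [hb ->]]]].
           assert (czb : z ⋅ b = b ⋅ z).
           { set (c := z ⋅ b ⋅ ginv z ⋅ ginv b).
             destruct (classic (c = gone)) as [ce|cne].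
             - rewrite <- (m1l (b ⋅ z)), <- ce. unfold c. gsg. reflexivity.
             - exfalso. destruct (rf c cne) as [N1 [nN1 [fN1 hN1]]].
               assert (gN1 : gd N1) by (apply rf_gd; auto).
               destruct (inL N1 gN1 z (B0K z hzB) hzL) as [a0 [nu [ha0 [[hnu _] ez]]]].
               apply hN1. destruct nN1 as [SN1 nrm1].
               assert (cab : ginv a0 ⋅ ginv b = ginv b ⋅ ginv a0).
               { rewrite <- !invM. f_equal. symmetry. apply commAB; auto. }
               replace c with (a0 ⋅ (nu ⋅ (b ⋅ ginv nu ⋅ ginv b)) ⋅ ginv a0).
               + apply nrm1. apply sgM; auto. apply nrm1. now apply sgV.
               + unfold c. rewrite ez. gsg. rewrite cab. reflexivity. }
           rewrite <- mA, <- (commAB a z); auto. rewrite mA, czb. now rewrite mA.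
        -- intros [LZ hLZ]. apply B0inf.
           destruct (choice_fun (fun x y => (exists b, B0 b /\ eqv L x b) -> B0 y /\ eqv L x y)) as [bx hbx].
           { intro x. destruct (classic (exists b, B0 b /\ eqv L x b)) as [[b hb]|nb]. exists b; auto. exists x; tauto. }
           exists (prodl (map bx Xs) LZ). intros g hg.
           destruct (maxcov Ns gNs Xspw g (B0K g hg)) as [x [hx ex]].
           destruct (hbx x) as [hb1 hb2]. eauto.
           apply in_map_iff. exists (bx x, ginv (bx x) ⋅ g). split. simpl. apply mK.
           apply in_prod. apply in_map; auto. apply hLZ. split. apply sgM; auto. now apply sgV.
           apply eqv_trans with x; auto. now apply eqv_sym.
      * destruct (not_inf B0 B0fin) as [LB hLB].
        apply (central K (fun g => B g /\ A0 g) (la ++ lb)); auto.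
        -- intros z [hz _]; auto.
        -- intros z k [hzB hzA] hk. destruct (decAB k hk) as [a [b [ha [hb ->]]]].
           rewrite <- mA, <- (commAB a z); auto. rewrite mA, (commAB z b); auto. now rewrite mA.
        -- intros [LZ hLZ]. apply Binf. exists (prodl LZ LB). intros b hb.
           destruct (dec b (BK b hb)) as [a0 [b0 [ha0 [hb0 ->]]]].
           apply in_map_iff. exists (a0, b0). split; auto. apply in_prod; auto. apply hLZ. split; auto.
           replace a0 with ((a0 ⋅ b0) ⋅ ginv b0) by apply mKVr. apply sgM; auto. apply sgV; auto.

  -
    assert (A0fin : ~ infinite_set G A0).
    { intro A0inf. destruct (inf_list A0 A0inf R0) as [lA [ndA [hlA lAA]]].
      destruct (rf_avoid rf (map (fun p => ginv (fst p) ⋅ snd p)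
          (filter (fun p => if excluded_middle_informative (fst p = snd p) then false else true) (list_prod lA lA))))
        as [N [gN hN]].
      { intros g hg. apply in_map_iff in hg as [[a b] [<- hq]]. apply filter_In in hq as [_ hq]. simpl in *.
        destruct excluded_middle_informative; try discriminate. intro e. apply n0.
        rewrite <- (mK a b), e. symmetry; apply m1r. }
      apply noP2. exists N. split; auto. exists lA. split; auto. split; [|lia].
      split; auto. intros a b ha hb [e _]. apply NNPP. intro ne. apply (hN (ginv a ⋅ b)); auto.
      apply in_map_iff. exists (a, b). split; auto. apply filter_In. split. now apply in_prod.
      simpl. destruct excluded_middle_informative; tauto. }
    destruct (not_inf A0 A0fin) as [LA hLA].
    apply (central K (fun g => A g /\ B0 g) (la ++ lb)); auto.
    + intros z [hA _]; auto.
    + intros z k [hA hB] hk. destruct (decAB k hk) as [a [b [ha [hb ->]]]].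
      rewrite <- mA, <- (commAB a z); auto. rewrite mA, (commAB z b); auto. now rewrite mA.
    + intros [LZ hLZ]. apply Ainf. exists (prodl LA LZ). intros a ha.
      destruct (dec a (AK a ha)) as [a0 [b0 [ha0 [hb0 ->]]]].
      apply in_map_iff. exists (a0, b0). split; auto. apply in_prod; auto. apply hLZ. split; auto.
      replace b0 with (ginv a0 ⋅ (a0 ⋅ b0)) by apply mKV. apply sgM; auto. apply sgV; auto.
Qed.
End Main.


Local Close Scope nat_scope.

Theorem proposition4p5 (G : group) :
  finitely_generated G -> residually_finite G -> presentable_by_product G ->
  rank_gradient G = Finite 0.
Proof.
  exact (@main_thm G).
Qed.
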